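(* Let $n\ge3$, $k\in\mathbf{N}$, $\mathbf{A}$ an alphabet of $n$ letters, and $$\mathbf{S}_3^{n,k}=\{XY : X,Y\in\mathbf{A}^*,\ |X|=|Y|\ge k+1,\ d(X,Y)\le k\}.$$ Then $\mathbf{S}_3^{n,k}$ is incomplete, i.e. there exist arbitrarily long (indeed, an infinite) words over $\mathbf{A}$ free from $\mathbf{S}_3^{n,k}$.
   Context: A word over $\mathbf{A}$ is a finite sequence of letters; $\mathbf{A}^*$ is the set of all words; $|X|$ is the length of $X$. For words of equal length, $d(X,Y)$ is the Hamming distance. A subword is a block of consecutive letters. For $\mathbf{S}\subseteq\mathbf{A}^*$, a word (finite or infinite) is free from $\mathbf{S}$ if none of its finite subwords belongs to $\mathbf{S}$. $\mathbf{S}$ is complete if there is $k\in\mathbf{N}$ such that every word free from $\mathbf{S}$ has length less than $k$; otherwise it is incomplete. *)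

(* Defs.v *)
From mathcomp Require Import all_boot.
Set Implicit Arguments. Unset Strict Implicit. Unset Printing Implicit Defensive.

(* Hamming distance of two words (used only for words of equal length). *)
Definition hamming (A : eqType) (X Y : seq A) : nat :=
  count (fun p => p.1 != p.2) (zip X Y).

Definition S3 (A : eqType) (k : nat) (w : seq A) : Prop :=
  exists X Y : seq A,
    w = X ++ Y /\ size X = size Y /\ k.+1 <= size X /\ hamming X Y <= k.

Definition subword (A : Type) (u w : seq A) : Prop :=
  exists a b : seq A, w = a ++ u ++ b.

Definition free (A : Type) (S : seq A -> Prop) (w : seq A) : Prop :=
  forall u, subword u w -> ~ S u.

Definition free_inf (A : Type) (S : seq A -> Prop) (f : nat -> A) : Prop :=
  forall i l, ~ S (mkseq (fun j => f (i + j)) l).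

Definition complete (A : Type) (S : seq A -> Prop) : Prop :=
  exists K : nat, forall w : seq A, free S w -> size w < K.

(* Main.v *)
Require Import Defs.
From mathcomp Require Import all_boot zify.
Set Implicit Arguments. Unset Strict Implicit. Unset Printing Implicit Defensive.

Fixpoint tmf (f n : nat) : bool :=
  match f with
  | 0 => false
  | f'.+1 => if n is 0 then false else xorb (odd n) (tmf f' n./2)
  end.
Definition tm n := tmf n n.

Lemma halfS_le n : n.+1./2 <= n.
Proof. have := odd_double_half n.+1. rewrite -muln2. case: (odd n.+1) => /=; lia. Qed.

Lemma tmf_irr f1 f2 n : n <= f1 -> n <= f2 -> tmf f1 n = tmf f2 n.
Proof.
elim: f1 f2 n => [|f1 IH] [|f2] [|n] //= H1 H2.
by rewrite (IH f2) //; have := halfS_le n; lia.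
Qed.

Lemma tm_rec n : 0 < n -> tm n = xorb (odd n) (tm n./2).
Proof.
case: n => [|n] // _. rewrite /tm /=. congr xorb. apply: tmf_irr => //.
have := halfS_le n; lia.
Qed.

Lemma tm_even q : tm (2 * q) = tm q.
Proof.
case: q => [|q] //. rewrite tm_rec; last lia.
have -> : (2 * q.+1)./2 = q.+1 by rewrite mulnC muln2 doubleK.
by rewrite oddM.
Qed.

Lemma tm_odd q : tm (2 * q + 1) = ~~ tm q.
Proof.
rewrite tm_rec; last lia.
have -> : (2 * q + 1)./2 = q by rewrite mulnC muln2 addnC (half_bit_double q true).
by rewrite oddD oddM.
Qed.
Lemma par n : exists q, n = 2 * q \/ n = 2 * q + 1.
Proof.
exists n./2. have := odd_double_half n. rewrite -muln2.
case: (odd n) => /= H; [right|left]; lia.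
Qed.

Lemma tm_pair q : tm (2 * q + 1) = ~~ tm (2 * q).
Proof. by rewrite tm_odd tm_even. Qed.

Lemma no3 n : tm n = tm n.+1 -> tm n.+1 = tm n.+2 -> False.
Proof.
have [q [->|->]] := par n.
- move=> H _. move: H. have -> : (2*q).+1 = 2*q+1 by lia. rewrite tm_pair. by case: (tm (2*q)).
- move=> _. have -> : (2 * q + 1).+1 = 2 * q.+1 by lia.
  have -> : (2 * q.+1).+1 = 2 * q.+1 + 1 by lia.
  rewrite tm_pair. by case: (tm _).
Qed.

Definition ov i m := forall j, j <= m -> tm (i + j) = tm (i + m + j).

Lemma neq_trans_b (a b c : bool) : a != b -> b != c -> a = c.
Proof. by case: a; case: b; case: c. Qed.

Lemma ovfree m : 0 < m -> forall i, ~ ov i m.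
Proof.
elim/ltn_ind: m => m IH m0 i Hov.
have [m' [Em|Em]] := par m.
-
  have m'0 : 0 < m' by lia.
  have Hm' : m' < m by lia.
  apply: (IH m' Hm' m'0 (i./2)).
  have [i' [Ei|Ei]] := par i; have -> : i./2 = i' by rewrite Ei mulnC muln2 ?doubleK // addnC (half_bit_double i' true).
  + move=> j Hj. have := Hov (2 * j) ltac:(lia).
    have -> : i + 2 * j = 2 * (i' + j) by lia.
    have -> : i + m + 2 * j = 2 * (i' + m' + j) by lia.
    by rewrite !tm_even.
  + move=> j Hj. have := Hov (2 * j) ltac:(lia).
    have -> : i + 2 * j = 2 * (i' + j) + 1 by lia.
    have -> : i + m + 2 * j = 2 * (i' + m' + j) + 1 by lia.
    by rewrite !tm_odd => /negb_inj.
-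
  case: (posnP m') => [m'z|m'p].
  + have h0 := Hov 0 (leq0n _). have h1 := Hov 1 ltac:(lia).
    apply: (no3 (n:=i)).
    * move: h0; rewrite addn0 -addn1; congr (_ = _); congr tm; lia.
    * move: h1; rewrite -addn1; congr (_ = _); congr tm; lia.
  + have alt1 : forall j, j < m -> tm (i + j) != tm (i + j).+1.
      move=> j Hj. have [q [Eq|Eq]] := par (i + j).
      * rewrite Eq. have -> : (2*q).+1 = 2*q+1 by lia. by rewrite tm_pair; case: (tm _).
      * have h0 := Hov j ltac:(lia). have h1 := Hov j.+1 ltac:(lia).
        rewrite -addnS h0 h1.
        have -> : i + m + j = 2 * (q + m' + 1) by lia.
        have -> : (i + m + j.+1) = 2 * (q + m' + 1) + 1 by lia.
        rewrite tm_pair. by case: (tm _).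
    have alt : forall j, j < 2 * m -> tm (i + j) != tm (i + j).+1.
      move=> j Hj. case: (ltnP j m) => Hjm; first exact: alt1.
      have h0 := Hov (j - m) ltac:(lia). have h1 := Hov (j - m).+1 ltac:(lia).
      have := alt1 (j - m) ltac:(lia).
      rewrite -addnS h0 h1.
      have -> : i + m + (j - m) = i + j by lia.
      by have -> : i + m + (j - m).+1 = (i + j).+1 by lia.
    have [e [He|He]] : exists e, (i = 2 * e \/ i + 1 = 2 * e).
      have [q [Eq|Eq]] := par i; [exists q; left | exists q.+1; right]; lia.
    * have a0 := alt 0 ltac:(lia). have a1 := alt 1 ltac:(lia).
      have a2 := alt 2 ltac:(lia). have a3 := alt 3 ltac:(lia).
      move: a0 a1 a2 a3.
      have -> : i + 0 = 2 * e by lia. have -> : (2 * e).+1 = i + 1 by lia.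
      have -> : (i+1).+1 = 2 * e.+1 by lia. have -> : i + 2 = 2 * e.+1 by lia.
      have -> : (2 * e.+1).+1 = i + 3 by lia. have -> : (i + 3).+1 = 2 * e.+2 by lia.
      rewrite !tm_even => a0 a1 a2 a3.
      apply: (no3 (n := e)); [exact: (neq_trans_b a0 a1) | exact: (neq_trans_b a2 a3)].
    * have a0 := alt 1 ltac:(lia). have a1 := alt 2 ltac:(lia).
      have a2 := alt 3 ltac:(lia). have a3 := alt 4 ltac:(lia).
      move: a0 a1 a2 a3.
      have -> : i + 1 = 2 * e by lia. have -> : (2 * e).+1 = i + 2 by lia.
      have -> : (i+2).+1 = 2 * e.+1 by lia. have -> : i + 3 = 2 * e.+1 by lia.
      have -> : (2 * e.+1).+1 = i + 4 by lia. have -> : (i + 4).+1 = 2 * e.+2 by lia.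
      rewrite !tm_even => a0 a1 a2 a3.
      apply: (no3 (n := e)); [exact: (neq_trans_b a0 a1) | exact: (neq_trans_b a2 a3)].
Qed.
Definition s3 n : nat := if tm n == tm n.+1 then 0 else if tm n then 1 else 2.

Lemma s3_step n : tm n.+1 = xorb (tm n) (s3 n != 0).
Proof. rewrite /s3; case: (tm n); case: (tm n.+1) => //. Qed.

Lemma s3_val n : s3 n != 0 -> tm n = (s3 n == 1).
Proof. rewrite /s3; case: (tm n); case: (tm n.+1) => //. Qed.

Lemma s3_lt n : s3 n < 3.
Proof. rewrite /s3; case: (tm n); case: (tm n.+1) => //. Qed.

Lemma s3_sqfree i t : 0 < t -> ~ (forall j, j < t -> s3 (i + j) = s3 (i + t + j)).
Proof.
move=> t0 H.
have inv : forall j, j <= t -> xorb (tm (i + j)) (tm (i + t + j)) = xorb (tm i) (tm (i + t)).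
  elim=> [|j IHj] Hj; first by rewrite !addn0.
  rewrite !addnS !s3_step -(H j) ?addnA; last lia.
  rewrite -IHj; last lia.
  by case: (tm _); case: (tm _); case: (_ != 0).
case E: (xorb (tm i) (tm (i + t))).
- have z : forall j, j < t -> s3 (i + j) = 0.
    move=> j Hj. apply/eqP; apply: contraT => nz.
    have e1 := s3_val nz. have nz' : s3 (i + t + j) != 0 by rewrite -H.
    have e2 := s3_val nz'. rewrite -H // in e2.
    have := inv j ltac:(lia). rewrite E e1 e2. by case: (_ == _).
  have st : forall n, s3 n = 0 -> tm n.+1 = tm n.
    by move=> n hn; rewrite s3_step hn; case: (tm n).
  apply: (no3 (n := i)).
  + by rewrite st // -(addn0 i) z.
  + have : s3 (i + 1) = 0.
      case: (ltnP 1 t) => ht; first exact: z.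
      have -> : i + 1 = i + t + 0 by lia. by rewrite -H // addn0 -(addn0 i) z.
    by rewrite addn1 => /st ->.
- apply: (ovfree t0 (i := i)) => j Hj.
  by have := inv j Hj; rewrite E; case: (tm _); case: (tm _).
Qed.

Lemma cnt_split (a b : pred nat) s :
  count a s = count (predI a b) s + count (predI a (predC b)) s.
Proof. elim: s => //= x s ->; case: (a x); case: (b x) => /=; lia. Qed.

Lemma img_le L (Q F : pred nat) N M :
  (forall c, c < N -> Q c -> exists j, [/\ j < M, F j & j %% L = c]) ->
  count Q (iota 0 N) <= count F (iota 0 M).
Proof.
move=> H. rewrite -!size_filter.
rewrite -(size_map (fun j => j %% L) (filter F (iota 0 M))).
apply: uniq_leq_size; first by apply: filter_uniq; apply: iota_uniq.
move=> c; rewrite mem_filter mem_iota => /andP [Qc /andP [_ cN]].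
have [j [jM Fj jc]] := H c cN Qc.
apply/mapP; exists j => //. by rewrite mem_filter Fj mem_iota jM.
Qed.

Lemma cnt_shift (P : pred nat) L k n : (forall j, P (j + L) = P j) ->
  count P (iota (k * L) n) = count P (iota 0 n).
Proof.
move=> HP. rewrite -[k * L]addn0 (iotaDl (k * L) 0 n) count_map. apply: eq_count => j /=.
elim: k => [|k IH] //=. by rewrite mulSn (addnC L) -addnA (addnC L) addnA HP.
Qed.

Lemma cnt_period (P : pred nat) L t r : (forall j, P (j + L) = P j) ->
  count P (iota 0 (t * L + r)) = t * count P (iota 0 L) + count P (iota 0 r).
Proof.
move=> HP. elim: t => [|t IH] //=.
have -> : t.+1 * L + r = L + (t * L + r) by lia.
rewrite iotaD count_cat add0n -{2}(mul1n L) (cnt_shift _ _ HP) IH mulSn. lia.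
Qed.

Lemma cnt_rot (Q : pred nat) L p : 0 < L ->
  count (fun c => Q ((p + c) %% L)) (iota 0 L) = count Q (iota 0 L).
Proof.
move=> L0.
have U : uniq (map (fun c => (p + c) %% L) (iota 0 L)).
  rewrite map_inj_in_uniq ?iota_uniq // => c1 c2.
  rewrite !mem_iota /= !add0n => c1L c2L /eqP.
  rewrite eqn_modDl !modn_small // => /eqP //.
have S : {subset map (fun c => (p + c) %% L) (iota 0 L) <= iota 0 L}.
  by move=> x /mapP [c _ ->]; rewrite mem_iota add0n ltn_pmod.
have PE : perm_eq (map (fun c => (p + c) %% L) (iota 0 L)) (iota 0 L).
  apply: uniq_perm => //; first exact: iota_uniq.
  by have [_ E] := uniq_min_size U S ltac:(by rewrite size_map).
by rewrite -(count_map (fun c => (p + c) %% L) Q); apply/permP.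
Qed.
Lemma blow (s : nat -> nat)
  (SF : forall i t, 0 < t -> ~ (forall j, j < t -> s (i + j) = s (i + t + j)))
  L p m : 0 < L -> L <= m ->
  L <= count (fun j => s ((p + j) %/ L) != s ((p + m + j) %/ L)) (iota 0 m).
Proof.
move=> L0 Lm.
set mm := fun j => s ((p + j) %/ L) != s ((p + m + j) %/ L).
have nadj : forall n, s n != s n.+1.
  move=> n; apply/eqP => E; apply: (SF n 1) => // j; rewrite ltnS leqn0 => /eqP ->.
  by rewrite !addn0 addn1.
set t := m %/ L. set r := m %% L.
have Em : m = t * L + r by rewrite /t /r -divn_eq.
have rL : r < L by rewrite /r ltn_pmod.
have t1 : 0 < t by rewrite /t divn_gt0.
have dq : forall q o, o < L -> (q * L + o) %/ L = q.
  by move=> q o oL; rewrite divnMDl // divn_small // addn0.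
have dq1 : forall q o, L <= o -> o < L + L -> (q * L + o) %/ L = q.+1.
  move=> q o h1 h2. have -> : q * L + o = q.+1 * L + (o - L) by rewrite mulSn; lia.
  apply: dq; lia.
have Ep : forall c, p + c = (p + c) %/ L * L + (p + c) %% L by move=> c; apply: divn_eq.
have oL : forall c, (p + c) %% L < L by move=> c; rewrite ltn_pmod.
have X1 : forall c i, (p + (c + i * L)) %/ L = (p + c) %/ L + i.
  move=> c i. have -> : p + (c + i * L) = ((p + c) %/ L + i) * L + (p + c) %% L.
    move: (Ep c); set A := (p + c) %/ L; set B := (p + c) %% L; rewrite mulnDl; lia.
  by rewrite dq.
have Y1 : forall c i, (p + c) %% L + r < L ->
   (p + m + (c + i * L)) %/ L = (p + c) %/ L + i + t.
  move=> c i h. have -> : p + m + (c + i * L) = ((p + c) %/ L + i + t) * L + ((p + c) %% L + r).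
    move: (Ep c); set A := (p + c) %/ L; set B := (p + c) %% L; rewrite !mulnDl Em; lia.
  by rewrite dq.
have Y2 : forall c i, L <= (p + c) %% L + r ->
   (p + m + (c + i * L)) %/ L = (p + c) %/ L + i + t + 1.
  move=> c i h. have -> : p + m + (c + i * L) = ((p + c) %/ L + i + t) * L + ((p + c) %% L + r).
    move: (Ep c); set A := (p + c) %/ L; set B := (p + c) %% L; rewrite !mulnDl Em; lia.
  by rewrite (dq1 _ _ h) ?addn1 //; have := oL c; lia.
have Pcls : forall c, c < L -> (p + c) %% L + r < L -> exists i, i < t /\ mm (c + i * L).
  move=> c cL h. case: (boolP (has (fun i => mm (c + i * L)) (iota 0 t))).
    by move=> /hasP [i]; rewrite mem_iota => /andP [_ it] Hm; exists i.
  move=> /hasPn H; exfalso; apply: (SF ((p + c) %/ L) t t1) => j jt.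
  have := H j ltac:(by rewrite mem_iota). rewrite /mm X1 Y1 // negbK => /eqP ->.
  by congr s; lia.
have Rcls : forall c, c < r -> L <= (p + c) %% L + r -> exists i, i <= t /\ mm (c + i * L).
  move=> c cr h. case: (boolP (has (fun i => mm (c + i * L)) (iota 0 t.+1))).
    by move=> /hasP [i]; rewrite mem_iota => /andP [_ it] Hm; exists i.
  move=> /hasPn H; exfalso; apply: (SF ((p + c) %/ L) t.+1 ltac:(lia)) => j jt.
  have := H j ltac:(by rewrite mem_iota). rewrite /mm X1 Y2 // negbK => /eqP ->.
  by congr s; lia.
have memlt : forall c i, c < L -> i < t -> c + i * L < m.
  move=> c i cL it. rewrite Em. have := leq_mul it (leqnn L); rewrite mulSn.
  lia.
have memlt2 : forall c i, c < r -> i <= t -> c + i * L < m.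
  move=> c i cL it. rewrite Em. have := leq_mul it (leqnn L).
  lia.
have modc : forall c i, c < L -> (c + i * L) %% L = c.
  by move=> c i cL; rewrite addnC modnMDl modn_small.
have modp : forall c i, (p + (c + i * L)) %% L = (p + c) %% L.
  by move=> c i; rewrite addnA addnC modnMDl.
case: (boolP (all (fun c => has (fun i => (c + i * L < m) && mm (c + i * L)) (iota 0 t.+1)) (iota 0 L))).
-
  move=> /allP H.
  have := @img_le L predT mm L m. rewrite count_predT size_iota. apply => c cL _.
  have /hasP [i _ /andP [im mi]] := H c ltac:(by rewrite mem_iota).
  by exists (c + i * L); split => //; rewrite modc.
- move=> /allPn [c0]; rewrite mem_iota add0n => c0L /hasPn Hn.
  have agree : forall i, c0 + i * L < m -> i <= t ->
      s ((p + c0) %/ L + i) = s ((p + m + (c0 + i * L)) %/ L).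
    move=> i im it. have := Hn i ltac:(by rewrite mem_iota; lia).
    by rewrite im /= /mm X1 negbK => /eqP.
  case: (ltnP ((p + c0) %% L + r) L) => hc0.
    have [i [it]] := Pcls c0 c0L hc0. rewrite /mm X1.
    by rewrite (agree i (memlt c0 i c0L it) ltac:(lia)) eqxx.
  case: (ltnP c0 r) => c0r.
    have [i [it]] := Rcls c0 c0r hc0. rewrite /mm X1.
    by rewrite (agree i (memlt2 c0 i c0r it) it) eqxx.
  set P := fun j => (p + j) %% L + r < L.
  set a0 := (p + c0) %/ L. set o0 := (p + c0) %% L.
  have Ea0 : p + c0 = a0 * L + o0 by apply: Ep.
  have ag2 : forall i, i < t -> s (a0 + i) = s (a0 + i + t + 1).
    move=> i it. rewrite (agree i (memlt c0 i c0L it) ltac:(lia)) Y2 //.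
  have allP_ : forall j, j < m -> P j -> mm j.
    move=> j jm Pj. rewrite /mm.
    set b := (p + j) %/ L. set o := (p + j) %% L.
    have Eb : p + j = b * L + o by apply: divn_eq.
    have -> : (p + m + j) %/ L = b + t.
      have -> : p + m + j = (b + t) * L + (o + r) by rewrite mulnDl Em; lia.
      by rewrite dq.
    have oL0 : o < L by rewrite ltn_pmod.
    have o0L : o0 < L by rewrite ltn_pmod.
    have hb1 : a0 <= b.
      rewrite leqNgt; apply/negP => hb.
      have := leq_mul hb (leqnn L); rewrite mulSn.
      rewrite /P -/o in Pj. lia.
    have hb2 : b <= a0 + t.
      rewrite leqNgt; apply/negP => hb.
      have := leq_mul hb (leqnn L); rewrite mulSn.
      rewrite mulnDl. lia.
    apply/eqP => E.
    case: (ltnP b (a0 + t)) => hb3.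
      have := ag2 (b - a0) ltac:(lia). have -> : a0 + (b - a0) = b by lia.
      rewrite E => E2. have := nadj (b + t). by rewrite -addn1 E2 eqxx.
    have := ag2 (b - a0 - 1) ltac:(lia).
    have -> : a0 + (b - a0 - 1) + t + 1 = b + t by lia.
    rewrite -E => E2. have := nadj (a0 + (b - a0 - 1)).
    have -> : (a0 + (b - a0 - 1)).+1 = b by lia.
    by rewrite E2 eqxx.
  have C1 : count mm (iota 0 m) = count P (iota 0 m) + count (predI mm (predC P)) (iota 0 m).
    rewrite (cnt_split mm P). congr (_ + _). apply: eq_in_count => j.
    rewrite mem_iota add0n /= => jm. by case Pj: (P j); rewrite ?andbF ?andbT // allP_.
  have perP : forall j, P (j + L) = P j by move=> j; rewrite /P addnA modnDr.
  have C2 : count P (iota 0 m) = t * (L - r) + count P (iota 0 r).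
    rewrite {1}Em (cnt_period t r perP). congr (_ * _ + _).
    rewrite /P (cnt_rot (fun o => o + r < L) p L0).
    have -> : L = (L - r) + r by lia.
    rewrite iotaD count_cat.
    have -> : count (fun o : nat => o + r < L - r + r) (iota 0 (L - r)) = L - r.
      rewrite -[in RHS](size_iota 0 (L - r)). apply/eqP; rewrite -all_count.
      by apply/allP => x; rewrite mem_iota; lia.
    have -> : count (fun o : nat => o + r < L - r + r) (iota (0 + (L - r)) r) = 0.
      apply/eqP; rewrite -leqn0 leqNgt -has_count; apply/hasPn => x; rewrite mem_iota; lia.
    lia.
  have C3 : count (predC P) (iota 0 r) <= count (predI mm (predC P)) (iota 0 m).
    apply: (@img_le L) => c cr /= nP. rewrite /P -leqNgt in nP.
    have [i [it Hm]] := Rcls c cr nP.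
    exists (c + i * L); split => //=; first exact: memlt2.
    - by rewrite Hm /P modp -leqNgt.
    - by rewrite modc //; lia.
  have C4 : count P (iota 0 r) + count (predC P) (iota 0 r) = r by rewrite count_predC size_iota.
  change (L <= count mm (iota 0 m)). have : L <= t * (L - r) + r by nia.
  lia.
Qed.
Lemma seg (T : Type) (g : nat -> T) a u b K :
  a ++ u ++ b = mkseq g K -> u = mkseq (fun j => g (size a + j)) (size u).
Proof.
move=> E. have Sz : size a + (size u + size b) = K.
  by rewrite -size_cat -size_cat E size_mkseq.
have := congr1 (fun w => take (size u) (drop (size a) w)) E.
rewrite /= drop_size_cat // take_size_cat // /mkseq -map_drop -map_take drop_iota take_iota.
move=> ->. have -> : minn (size u) (K - size a) = size u by apply/minn_idPl; lia.
rewrite add0n size_map size_iota -{1}[size a]addn0 iotaDl -map_comp.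
by apply: eq_map => j.
Qed.

Section Main.
Variables (k : nat) (A : finType) (x0 : A).
Hypothesis H3 : 3 <= #|A|.

Definition fw (x : nat) : A := nth x0 (enum A) (s3 (x %/ k.+1)).

Lemma fw_neq x y : (fw x != fw y) = (s3 (x %/ k.+1) != s3 (y %/ k.+1)).
Proof.
rewrite /fw nth_uniq ?enum_uniq // -cardE.
- by apply: leq_trans (s3_lt _) H3.
- by apply: leq_trans (s3_lt _) H3.
Qed.

Lemma key i l : ~ S3 k (mkseq (fun j => fw (i + j)) l).
Proof.
move=> [X [Y [E [sz [kM hm]]]]].
have EX := seg (g := fun j => fw (i + j)) (a := [::]) (b := Y) (esym E).
have EY : Y = mkseq (fun j => fw (i + (size X + j))) (size X).
  have := seg (g := fun j => fw (i + j)) (a := X) (u := Y) (b := [::]) ltac:(by rewrite cats0 -E).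
  by rewrite -sz.
rewrite /= in EX.
move: EX EY kM; set M := size X => EX EY kM.
move: hm. rewrite /hamming EY EX /mkseq zip_map count_map.
set c := count _ _ => hc.
have : k.+1 <= c.
  rewrite /c. have := blow s3_sqfree i (ltn0Sn k) kM.
  rewrite /M.
  move=> h; apply: (leq_trans h); rewrite leq_eqVlt; apply/orP; left; apply/eqP.
  apply: eq_count => j /=. by rewrite fw_neq add0n addnA.
lia.
Qed.
End Main.

Theorem theorem5 (n k : nat) (A : finType) :
  3 <= n -> #|A| = n ->
  ~ complete (@S3 A k) /\ exists f : nat -> A, free_inf (@S3 A k) f.
Proof.
move=> n3 cA.
have H3 : 3 <= #|A| by rewrite cA.
have : 0 < size (enum A) by move: H3; rewrite cardE; case: (size _).
case E: (enum A) => [|x0 rest] // _.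
split.
- move=> [K HK]. have := HK (mkseq (fw k x0) K). rewrite size_mkseq ltnn => H.
  suff: false by []. apply: H => u [a [b Eu]].
  rewrite (seg (g := fw k x0) (esym Eu)).
  exact: (key (k:=k) (x0:=x0) (i:=size a) (l:=size u) H3).
- exists (fw k x0) => i l. exact: (key (k:=k) (x0:=x0) (i:=i) (l:=l) H3).
Qed.
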